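(* Let $\theta>1$, $r\in(\theta^{-1},\theta^{-1/2}]$ and $s=\max\big(1,\frac{\ln\theta}{\ln(r\theta)}-2\big)$. Let $(P_1,\dots,P_n)$ be a random price sequence with values in $[1,\theta]$ whose maximum $P^*$ has law $F$, and let $Y$ be a random prediction with law $G$ on $[1,\theta]$, independent of the prices. Define $\Lambda(z)=\int\mathcal{E}(z,y)^s\,\mathrm{d}G(y)$ and $\Upsilon(y)=\frac{\int z\,\mathcal{E}(z,y)^s\,\mathrm{d}F(z)}{\mathbb{E}[P^*]}$. Then \[ \frac{\mathbb{E}[\mathsf{A}^1_r(P,Y)]}{\mathbb{E}[P^*]}\ \ge\ \frac1{r\theta}\int\Upsilon(y)\,\mathrm{d}G(y)\ =\ \frac{1}{r\theta}\int\frac{z\,\Lambda(z)}{\mathbb{E}[P^*]}\,\mathrm{d}F(z). \]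
   Context: One-max search: fix $\theta>1$. Prices $p_1,\dots,p_n\in[1,\theta]$ are revealed one at a time; the algorithm receives at the start a prediction $y\in[1,\theta]$ of the maximum price. At each step it irrevocably accepts the current price (payoff = that price) or rejects it; if nothing is accepted the payoff is $1$. Let $\varphi_r(z)=\frac{r\theta-1}{1-r}+\frac{1-r^2\theta}{1-r}\cdot\frac{z}{r\theta}$ and $\Phi^1_r(z)=\max(r\theta,\varphi_r(z))$; $\mathsf{A}^1_r$ accepts the first price $p_i\ge\Phi^1_r(y)$, and $\mathsf{A}^1_r(P,Y)$ is its payoff on the realized prices and prediction. $\mathcal{E}(a,b)=\min\{a/b,b/a\}$. *)

(* Defs.v *)
From mathcomp Require Import all_boot all_order all_algebra.
From mathcomp Require Import all_classical all_reals all_analysis.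
Set Implicit Arguments. Unset Strict Implicit. Unset Printing Implicit Defensive.
Import Order.TTheory GRing.Theory Num.Theory.
Local Open Scope ring_scope.

Section OneMax.
Variable R : realType.

Definition phi_r (theta r z : R) : R :=
  (r * theta - 1) / (1 - r) + (1 - r ^+ 2 * theta) / (1 - r) * (z / (r * theta)).

Definition Phi1 (theta r z : R) : R := Num.max (r * theta) (phi_r theta r z).

Fixpoint accept_first (thr : R) (s : seq R) : R :=
  match s with
  | [::] => 1
  | x :: s' => if thr <= x then x else accept_first thr s'
  end.

(* A^1_r(P, Y): payoff of the algorithm on prices x_0,...,x_{n-1} (revealed
   in this order) with prediction y *)
Definition A1 (theta r : R) (n : nat) (x : 'I_n -> R) (y : R) : R :=
  accept_first (Phi1 theta r y) [seq x i | i <- enum 'I_n].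

Definition Ecomp (a b : R) : R := Num.min (a / b) (b / a).

(* the maximum price (n >= 1 in the statement; all prices are >= 1) *)
Definition maxprice (n : nat) (x : 'I_n -> R) : R := \big[Num.max/1]_(i < n) x i.

Definition s_exp (theta r : R) : R := Num.max 1 (ln theta / ln (r * theta) - 2).

End OneMax.

(* Main.v *)
Require Import Defs.
From mathcomp Require Import all_boot all_order all_algebra.
From mathcomp Require Import all_classical all_reals all_analysis.
From mathcomp Require Import measurable_realfun.
From mathcomp.algebra_tactics Require Import ring lra.
Import Order.TTheory GRing.Theory Num.Theory.
Local Open Scope ring_scope.
Local Open Scope classical_set_scope.
Section pw.
Context {R : realType}.

Lemma conv_pow (nu c p : R) : 0 <= nu -> nu <= 1 -> 0 <= c -> 1 <= p ->
  (nu * 1 + (1 - nu) * c) `^ p <= nu * 1 + (1 - nu) * c `^ p.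
Proof.
move=> n0 n1 c0 p1.
have := @convex_powR R p p1 (Itv01 n0 n1) 1 c.
rewrite !convRE /= powR1.
apply; rewrite inE /= in_itv /= ?andbT //.
Qed.

Lemma phi_eq (theta r y : R) : r < 1 -> 0 < r * theta ->
  phi_r theta r y * ((1 - r) * (r * theta)) =
  (r * theta - 1) * (r * theta) + (1 - r ^+ 2 * theta) * y.
Proof.
move=> r1 a0; rewrite /phi_r; field.
have := gt_eqF a0; rewrite mulf_eq0 => /norP[-> ->] /=.
by rewrite subr_eq0 eq_sym lt_eqF.
Qed.

Lemma core (theta r s z y : R) : 1 < theta -> 1 < r * theta -> r ^+ 2 * theta <= 1 ->
  1 <= s -> theta <= (r * theta) `^ (s + 2) -> r * theta <= y -> y <= theta ->
  0 <= z -> z <= phi_r theta r y -> z `^ (s + 1) <= r * theta * y `^ s.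
Proof.
move=> th1 a1 r2 s1 ath ay yth z0 zphi.
set a := r * theta in a1 ath ay zphi *.
have th0 : 0 < theta by lra.
have r0 : 0 < r.
  by move: a1; rewrite /a => a1; rewrite -(pmulr_lgt0 _ th0); lra.
have r1 : r < 1.
  have : r * r * theta <= 1 by rewrite -expr2.
  have : r * r * theta > r * 1.
    by rewrite -mulrA ltr_pM2l //.
  lra.
set ph := phi_r theta r y.
have D0 : 0 < (1 - r) * a by rewrite mulr_gt0 // ?subr_gt0 //; lra.
have phE := @phi_eq theta r y r1 (lt_trans ltr01 a1 : 0 < a).
rewrite -/ph -/a in phE.
have y0 : 0 < y by lra.
have phy : ph <= y.
  rewrite -(ler_pM2r D0) phE.
  have : (1 - r^+2 * theta) * y = y - r * a * y by rewrite /a; ring.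
  move=> ->.
  have : y * ((1 - r) * a) = y * a - r * a * y by ring.
  move=> ->. nra.
have phy2 : y <= ph * a.
  have : (ph * a) * ((1 - r) * a) = ((a - 1) * a + (1 - r ^+ 2 * theta) * y) * a.
    by rewrite -phE; ring.
  move=> E.
  rewrite -(ler_pM2r D0) E.
  have : (1 - r^+2 * theta) * y = y - r * a * y by rewrite /a; ring.
  move=> ->.
  have : a * (a - 1) * (r * (theta - y)) >= 0.
    by rewrite !mulr_ge0 //; lra.
  rewrite /a; nra.
have ph0 : 0 < ph.
  have : 0 < ph * a by lra.
  by rewrite pmulr_lgt0 //; lra.
have a0 : 0 < a by lra.
have phv : ph = ((a - 1) * a + (1 - r * a) * y) / ((1 - r) * a).
  apply: (mulIf (lt0r_neq0 D0)); rewrite phE mulfVK ?(gt_eqF D0) //.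
  by rewrite /a; ring.
set c := a^-1.
have c0 : 0 < c by rewrite invr_gt0.
have c1 : c < 1 by rewrite invf_lt1.
set w := ph / y.
have w0 : 0 <= w by rewrite divr_ge0 //; lra.
have cw : c <= w.
  by rewrite /c /w ler_pdivlMr // mulrC ler_pdivrMr.
have w1 : w <= 1 by rewrite /w ler_pdivrMr // mul1r.
set nu := (w - c) / (1 - c).
have nu0 : 0 <= nu by rewrite divr_ge0 //; lra.
have nu1 : nu <= 1 by rewrite ler_pdivrMr ?mul1r; lra.
have nuE : nu * 1 + (1 - nu) * c = w.
  rewrite /nu; field; rewrite subr_eq0 eq_sym lt_eqF //.
have s0 : 0 <= s + 1 by lra.
have cp : c `^ (s + 1) <= r.
  have E1 : c `^ (s + 1) * a `^ (s + 1) = 1.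
    by rewrite -powRM ?(ltW c0) ?(ltW a0) // mulVf ?(gt_eqF a0) // powR1.
  have E2 : a `^ (s + 2) = a `^ (s + 1) * a.
    rewrite (_ : s + 2 = (s + 1) + 1); last by ring.
    by rewrite powRD ?powRr1 ?(ltW a0) // (gt_eqF a0) implybT.
  have ap0 : 0 < a `^ (s + 1) by rewrite powR_gt0.
  have : 1 <= a `^ (s + 1) * r.
    rewrite E2 /a in ath.
    have : theta * 1 <= theta * (a `^ (s + 1) * r) by rewrite mulr1; move: ath; rewrite /a; nra.
    by rewrite ler_pM2l.
  move=> H1.
  have -> : c `^ (s + 1) = (a `^ (s + 1))^-1 by apply: (mulIf (lt0r_neq0 ap0)); rewrite E1 mulVf ?(gt_eqF ap0).
  by rewrite -div1r ler_pdivrMr // mulrC.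
have hw : w `^ (s + 1) <= nu + (1 - nu) * r.
  rewrite -nuE; apply: (le_trans (@conv_pow nu c (s + 1) nu0 nu1 (ltW c0) _)); first lra.
  rewrite mulr1 lerD2l ler_wpM2l //; lra.
have ya : y * (nu + (1 - nu) * r) = a.
  rewrite /nu /w /c phv; field.
  rewrite (gt_eqF a0) (gt_eqF y0) /= !subr_eq0 (gt_eqF a1) /=.
  by rewrite eq_sym (lt_eqF r1).
have : z `^ (s + 1) <= ph `^ (s + 1).
  by apply: ge0_ler_powR => //; rewrite ?nnegrE //; lra.
move=> /le_trans; apply.
have -> : ph = w * y by rewrite /w mulfVK ?(gt_eqF y0).
rewrite powRM ?(ltW y0) //.
have -> : y `^ (s + 1) = y `^ s * y.
  by rewrite powRD ?powRr1 ?(ltW y0) ?(gt_eqF y0) ?implybT.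
rewrite -ya (mulrC y (_ + _)) -mulrA [y `^ s * y]mulrC.
by rewrite ler_wpM2r // mulr_ge0 ?powR_ge0 //; lra.
Qed.

Lemma basic_r (theta r : R) : 1 < theta -> 1 < r * theta -> r ^+ 2 * theta <= 1 ->
  0 < r /\ r < 1.
Proof.
move=> th1 a1 r2.
have th0 : 0 < theta by lra.
have r0 : 0 < r by rewrite -(pmulr_lgt0 _ th0); lra.
split=> //.
have : r * r * theta <= 1 by rewrite -expr2.
have : r * r * theta > r * 1 by rewrite -mulrA ltr_pM2l.
lra.
Qed.

Lemma phi_lin (theta r y : R) : 1 < theta -> 1 < r * theta -> r ^+ 2 * theta <= 1 ->
  phi_r theta r y = ((r * theta - 1) * (r * theta) + (1 - r * (r * theta)) * y)
                    / ((1 - r) * (r * theta)).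
Proof.
move=> th1 a1 r2; have [r0 r1] := @basic_r theta r th1 a1 r2.
have D0 : 0 < (1 - r) * (r * theta) by rewrite mulr_gt0 //; lra.
apply: (mulIf (lt0r_neq0 D0)); rewrite (@phi_eq theta r y r1) ?mulfVK ?(gt_eqF D0) //; last lra.
by ring.
Qed.

Lemma phi_props (theta r y : R) : 1 < theta -> 1 < r * theta -> r ^+ 2 * theta <= 1 ->
  [/\ (y <= theta -> y <= phi_r theta r y * (r * theta)),
      (y <= r * theta -> phi_r theta r y <= r * theta) &
      (r * theta <= y -> phi_r theta r y <= y)].
Proof.
move=> th1 a1 r2; have [r0 r1] := @basic_r theta r th1 a1 r2.
have D0 : 0 < (1 - r) * (r * theta) by rewrite mulr_gt0 //; lra.
rewrite (@phi_lin theta r y th1 a1 r2).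
set a := r * theta in a1 D0 *.
have ra : r * a <= 1 by rewrite /a mulrA -expr2.
split => H.
- rewrite mulrAC ler_pdivlMr //.
  have : a * (a - 1) * (r * (theta - y)) >= 0 by rewrite !mulr_ge0 //; lra.
  rewrite /a; nra.
- rewrite ler_pdivrMr //.
  have : (1 - r * a) * (a - y) >= 0 by rewrite mulr_ge0 //; lra.
  nra.
- rewrite ler_pdivrMr //.
  have : (a - 1) * (y - a) >= 0 by rewrite mulr_ge0 //; lra.
  rewrite /a; nra.
Qed.

Lemma af_spec (thr : R) (l : seq R) :
  (accept_first thr l = 1 /\ all (fun x => x < thr) l) \/
  (thr <= accept_first thr l /\ accept_first thr l \in l).
Proof.
elim: l => [|x l IH] /=; first by left.
case: ifPn => hx.
  by right; rewrite mem_head.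
case: IH => [[-> ->]|[h1 h2]].
  by left; rewrite ltNge hx.
by right; split => //; rewrite in_cons h2 orbT.
Qed.

Lemma le_bigmax_seq (I : eqType) (l : seq I) (F : I -> R) i :
  i \in l -> F i <= \big[Num.max/1]_(j <- l) F j.
Proof.
elim: l => // a l IH; rewrite in_cons big_cons => /predU1P[->|/IH h].
  by rewrite le_max lexx.
by rewrite le_max h orbT.
Qed.

Lemma maxprice_ge n (x : 'I_n -> R) i : x i <= maxprice x.
Proof. by apply: le_bigmax_seq; rewrite mem_index_enum. Qed.

Lemma maxprice_P n (x : 'I_n -> R) (P : R -> Prop) :
  P 1 -> (forall a b, P a -> P b -> P (Num.max a b)) -> (forall i, P (x i)) ->
  P (maxprice x).
Proof. by move=> P1 PM Px; rewrite /maxprice; apply: big_ind. Qed.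

Lemma maxprice_in n (x : 'I_n -> R) theta : 1 <= theta ->
  (forall i, 1 <= x i <= theta) -> 1 <= maxprice x <= theta.
Proof.
move=> th1 hx; apply: (@maxprice_P n x (fun v => 1 <= v <= theta)).
- by rewrite lexx th1.
- move=> a b /andP[a1 a2] /andP[b1 b2]; rewrite le_max a1 /= ge_max a2 b2.
  done.
- exact: hx.
Qed.

Lemma Ecomp_props (z y : R) : 0 < z -> 0 < y ->
  [/\ 0 < Ecomp z y, Ecomp z y <= 1, Ecomp z y <= z / y, Ecomp z y <= y / z
   & (z <= y -> Ecomp z y = z / y)].
Proof.
move=> z0 y0; rewrite /Ecomp.
have h1 : 0 < z / y by rewrite divr_gt0.
have h2 : 0 < y / z by rewrite divr_gt0.
split.
- by rewrite lt_min h1 h2.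
- have [zy|yz] := leP z y.
    by rewrite ge_min ler_pdivrMr // mul1r zy.
  by rewrite ge_min; apply/orP; right; rewrite ler_pdivrMr // mul1r ltW.
- by rewrite ge_min lexx.
- by rewrite ge_min lexx orbT.
- move=> zy; apply: min_l.
  rewrite (@le_trans _ _ 1) //; first by rewrite ler_pdivrMr // mul1r.
  by rewrite ler_pdivlMr // mul1r.
Qed.

Lemma pointwise (theta r s : R) n (x : 'I_n -> R) (y : R) :
  1 < theta -> 1 < r * theta -> r ^+ 2 * theta <= 1 -> 1 <= s ->
  theta <= (r * theta) `^ (s + 2) ->
  (forall i, 1 <= x i <= theta) -> 1 <= y <= theta ->
  maxprice x * Ecomp (maxprice x) y `^ s <= r * theta * A1 theta r x y.
Proof.
move=> th1 a1 r2 s1 ath hx /andP[y1 yth].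
have [r0 r1] := @basic_r theta r th1 a1 r2.
have /andP[z1 zth] := @maxprice_in n x theta (ltW th1) hx.
set z := maxprice x in z1 zth *.
have z0 : 0 < z by lra.
have y0 : 0 < y by lra.
have [E0 E1 Ezy Eyz Eeq] := @Ecomp_props z y z0 y0.
set E := Ecomp z y in E0 E1 Ezy Eyz Eeq *.
have EsE : E `^ s <= E by apply: ge1r_powR => //; rewrite E0.
have Es0 : 0 <= E `^ s by apply: powR_ge0.
have zEy : z * E `^ s <= y.
  apply: (@le_trans _ _ (z * E)); first by rewrite ler_wpM2l //; lra.
  by rewrite -ler_pdivlMl // mulrC.
have zEz : z * E `^ s <= z.
  by rewrite -{2}(mulr1 z) ler_wpM2l //; [lra | apply: le_trans EsE E1].
have [ph1 ph2 ph3] := @phi_props theta r y th1 a1 r2.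
set T := Phi1 theta r y.
have aT : r * theta <= T by rewrite /T /Phi1 le_max lexx.
have phT : phi_r theta r y <= T by rewrite /T /Phi1 le_max lexx orbT.
rewrite /A1 -/T.
case: (af_spec T [seq x i | i <- enum 'I_n]) => [[-> hall]|[h1 _]]; last first.
  apply: (le_trans zEy); apply: (le_trans (ph1 yth)).
  rewrite mulrC ler_wpM2l //; first lra.
  exact: le_trans phT h1.
rewrite mulr1.
have zT : z < T.
  apply: (@maxprice_P n x (fun v => v < T)).
  - lra.
  - by move=> a b ha hb; rewrite gt_max ha hb.
  - move=> i; move/allP: hall; apply; apply: map_f; exact: mem_enum.
have [za|az] := leP z (r * theta); first exact: le_trans zEz za.
have Tph : T = phi_r theta r y.
  rewrite /T /Phi1; apply: max_r.
  rewrite leNgt; apply/negP => hlt.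
  have : T = r * theta by rewrite /T /Phi1; apply: max_l; exact: ltW.
  lra.
have ay : r * theta <= y.
  rewrite leNgt; apply/negP => hlt.
  have := ph2 (ltW hlt); lra.
have zy : z <= y by have := ph3 ay; lra.
rewrite (Eeq zy).
have ys0 : 0 < y `^ s by rewrite powR_gt0.
rewrite -(ler_pM2r ys0).
have -> : z * (z / y) `^ s * y `^ s = z `^ (s + 1).
  rewrite -mulrA -powRM ?divr_ge0 //; try lra.
  rewrite mulfVK ?(gt_eqF y0) // powRD ?powRr1 ?(gt_eqF z0) ?implybT //; try lra.
apply: core => //; lra.
Qed.

Lemma Ecomp_le1 (z y : R) : Ecomp z y <= 1.
Proof.
rewrite /Ecomp (_ : y / z = (z / y)^-1); last by rewrite invf_div.
have [q1|q1] := leP (z / y) 1; first by rewrite ge_min q1.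
rewrite ge_min; apply/orP; right; rewrite invf_le1 ?ltW //.
exact: lt_trans ltr01 q1.
Qed.

Lemma powR_le1 (a s : R) : a <= 1 -> 0 <= s -> a `^ s <= 1.
Proof.
move=> a1 s0; rewrite /powR; case: ifPn => _.
  by case: (s == 0).
rewrite expR_le1 mulr_ge0_le0 //; exact: ln_le0.
Qed.

Lemma s_props (theta r : R) : 1 < theta -> 1 < r * theta ->
  1 <= s_exp theta r /\ theta <= (r * theta) `^ (s_exp theta r + 2).
Proof.
move=> th1 a1; split; first by rewrite /s_exp le_max lexx.
have a0 : 0 < r * theta by lra.
have la : 0 < ln (r * theta) by rewrite ln_gt0.
have hs : ln theta / ln (r * theta) - 2 <= s_exp theta r by rewrite /s_exp le_max lexx orbT.
rewrite -ler_ln ?posrE ?powR_gt0 //; last lra.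
rewrite ln_powR -ler_pdivrMr //; lra.
Qed.

Lemma r2_prop (theta r : R) : 1 < theta -> 0 < r -> r <= theta `^ (- 2^-1) ->
  r ^+ 2 * theta <= 1.
Proof.
move=> th1 r0 rh.
have th0 : 0 < theta by lra.
have h : (theta `^ (- 2^-1)) ^+ 2 = theta^-1.
  rewrite -powR_mulrn ?powR_ge0 // -powRrM.
  have -> : - 2^-1 * 2%:R = -1 :> R by rewrite mulNr mulVf.
  by rewrite powR_inv1 // ltW.
have : r ^+ 2 <= theta^-1.
  rewrite -h; apply: lerXn2r; rewrite ?nnegrE ?powR_ge0 //; exact: ltW.
by rewrite -(ler_pM2r th0) mulVf ?gt_eqF.
Qed.
End pw.
Section meas.
Context {R : realType}.

Lemma measurable_inv_R : measurable_fun [set: R] (@GRing.inv R).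
Proof.
have -> : [set: R] = [set 0] `|` [set r : R | r != 0].
  apply/seteqP; split => x //= _; case: (eqVneq x 0) => [->|h]; [left|right] => //.
apply/measurable_funU => //.
  exact: open_measurable.
split.
  move=> _ B mB; case: (pselect (B (0:R)^-1)) => hB.
    have -> : [set 0] `&` GRing.inv @^-1` B = [set (0:R)].
      by apply/seteqP; split => x /=; [case|move=> ->].
    by [].
  have -> : [set 0] `&` GRing.inv @^-1` B = set0.
    by apply/seteqP; split => x //= [-> ?].
  by [].
apply: open_continuous_measurable_fun => //.
by apply/in_setP => x /= x0; exact: inv_continuous.
Qed.

Lemma measurable_Es d (T : measurableType d) (f g : T -> R) (s : R) :
  measurable_fun setT f -> measurable_fun setT g ->
  measurable_fun setT (fun t => Ecomp (f t) (g t) `^ s).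
Proof.
move=> mf mg.
apply: (@measurableT_comp _ _ _ _ _ _ (@powR R ^~ s)); first exact: measurable_powR.
rewrite /Ecomp; apply: measurable_minr.
- apply: measurable_funM => //; exact: measurableT_comp measurable_inv_R mg.
- apply: measurable_funM => //; exact: measurableT_comp measurable_inv_R mf.
Qed.

Lemma measurable_K d (T : measurableType d) (f g : T -> R) (s : R) :
  measurable_fun setT f -> measurable_fun setT g ->
  measurable_fun setT (fun t => f t * Ecomp (f t) (g t) `^ s).
Proof. by move=> mf mg; apply: measurable_funM => //; exact: measurable_Es. Qed.

Lemma measurable_bigmax d (T : measurableType d) (I : eqType) (l : seq I) (P : I -> T -> R) :
  (forall i, measurable_fun setT (P i)) ->
  measurable_fun setT (fun w => \big[Num.max/1]_(i <- l) P i w).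
Proof.
move=> mP; elim: l => [|a l IH].
  by under eq_fun do rewrite big_nil; exact: measurable_cst.
under eq_fun do rewrite big_cons.
exact: measurable_maxr.
Qed.

Local Open Scope ereal_scope.
Lemma le_integral_nm d (T : measurableType d) (mu : {measure set T -> \bar R})
  (f g : T -> \bar R) : (forall x, 0 <= f x) -> (forall x, f x <= g x) ->
  \int[mu]_x f x <= \int[mu]_x g x.
Proof.
move=> f0 fg.
have g0 : forall x, 0 <= g x by move=> x; exact: le_trans (f0 x) (fg x).
rewrite !ge0_integralTE //.
apply: le_ereal_sup => _ [h hf <-]; exists h => //= x.
exact: le_trans (hf x) (fg x).
Qed.

Lemma probT d (T : measurableType d) (mu : probability T R) :
  (mu : {measure set T -> \bar R}) setT = 1.
Proof. exact: probability_setT. Qed.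

Lemma int_boundsE d (T : measurableType d) (mu : probability T R) (f : T -> \bar R) (M : R) :
  measurable_fun setT f -> (forall x, 0 <= f x <= M%:E) ->
  0 <= \int[mu]_x f x <= M%:E.
Proof.
move=> mf fb; apply/andP; split.
  by apply: integral_ge0 => x _; case/andP: (fb x).
apply: (@le_trans _ _ (\int[mu]_x (cst M%:E) x)).
  apply: ge0_le_integral => //.
  - by move=> x _; case/andP: (fb x).
  - by move=> x _; case/andP: (fb x).
by rewrite integral_cst // probT mule1.
Qed.

Lemma int_lb1 d (T : measurableType d) (mu : probability T R) (f : T -> R) :
  measurable_fun setT f -> (forall x, (1 <= f x)%R) ->
  1 <= \int[mu]_x (f x)%:E.
Proof.
move=> mf fb.
apply: (@le_trans _ _ (\int[mu]_x (cst 1%:E) x)).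
  by rewrite integral_cst // probT mule1.
apply: ge0_le_integral => //.
- exact/measurable_EFinP.
- by move=> x _; rewrite lee_fin fb.
Qed.

Lemma pushF d (Om : measurableType d) (mu : probability Om R) (ps : Om -> R)
  (F : {measure set R -> \bar R}) :
  measurable_fun setT ps ->
  (forall A, measurable A -> F A = mu (ps @^-1` A)) ->
  forall (g : R -> R) (M : R), measurable_fun setT g -> (forall x, `|g (ps x)| <= M)%R ->
  \int[F]_y (g y)%:E = \int[mu]_x (g (ps x))%:E.
Proof.
move=> mps FE g M mg gb.
have intf : mu.-integrable (ps @^-1` setT) ((EFin \o g) \o ps).
  rewrite preimage_setT.
  apply: (@measurable_bounded_integrable _ _ _ mu (g \o ps)) => //.
  - by rewrite probT ltry.
  - exact: measurableT_comp.
  - exists M; split; rewrite ?num_real // => x Mx y _ /=.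
    by rewrite (le_trans (gb y)) // ltW.
have H := @integral_pushforward _ _ _ _ _ ps mps mu setT (EFin \o g) ((measurable_EFinP _ _).2 mg) intf measurableT.
rewrite preimage_setT in H.
rewrite [RHS](_ : _ = \int[mu]_(x in setT) ((EFin \o g) \o ps) x) //.
rewrite -H; apply: eq_measure_integral => A mA _ /=.
by rewrite FE.
Qed.
End meas.

Theorem corollary3 (R : realType) (theta r : R) (n : nat)
  (d : measure_display) (Omega : measurableType d) (mu : probability Omega R)
  (P : 'I_n -> Omega -> R) (G : probability R R) (F : probability R R) :
  1 < theta ->
  theta^-1 < r -> r <= theta `^ (- 2^-1) ->
  (0 < n)%N ->
  (forall i, measurable_fun setT (P i)) ->
  (forall i w, 1 <= P i w <= theta) ->
  G `[1, theta] = 1%E ->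
  (forall A : set R, measurable A ->
     F A = mu ((fun w => maxprice (fun i => P i w)) @^-1` A)) ->
  let s := s_exp theta r in
  let EPstar := \int[mu]_w maxprice (fun i => P i w) in
  let Lambda := fun z => \int[G]_y (Ecomp z y `^ s) in
  let Upsilon := fun y => (\int[F]_z (z * Ecomp z y `^ s)) / EPstar in
  (\int[(mu \x G)%E]_wy A1 theta r (fun i => P i wy.1) wy.2) / EPstar
    >= (r * theta)^-1 * \int[G]_y Upsilon y
  /\ (r * theta)^-1 * \int[G]_y Upsilon y
     = (r * theta)^-1 * \int[F]_z (z * Lambda z / EPstar).
Proof.
move=> th1 rlo rhi n0 mP Pb G1 FE s EP Lambda Upsilon.
have th0 : 0 < theta by lra.
have a1 : 1 < r * theta.
  by move: rlo; rewrite -div1r ltr_pdivrMr.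
have r0 : 0 < r by rewrite (lt_trans _ rlo) // invr_gt0.
have r2 := @r2_prop R theta r th1 r0 rhi.
have [s1 sth] := @s_props R theta r th1 a1.
rewrite -/s in s1 sth.
pose ps := fun w => maxprice (fun i => P i w).
have ps_in w : 1 <= ps w <= theta := @maxprice_in R n (fun i => P i w) theta (ltW th1) (fun i => Pb i w).
have mps : measurable_fun setT ps by apply: measurable_bigmax.
pose K := fun z y : R => z * Ecomp z y `^ s.
have Kb z y : 0 < z -> 0 <= K z y <= z.
  move=> z0; rewrite /K mulr_ge0 ?powR_ge0 ?(ltW z0) //=.
  rewrite ler_piMr ?(ltW z0) // powR_le1 ?Ecomp_le1 //; lra.
have ps0 w : 0 < ps w by have /andP[] := ps_in w; lra.
have mpsE : measurable_fun setT (fun w => (ps w)%:E) := (measurable_EFinP _ _).2 mps.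
have EPb : (0 <= \int[mu]_w (ps w)%:E <= theta%:E)%E.
  apply: int_boundsE => // w; have /andP[a b] := ps_in w.
  rewrite !lee_fin b andbT; lra.
have EP1 : (1 <= \int[mu]_w (ps w)%:E)%E.
  by apply: int_lb1 => // w; have /andP[] := ps_in w.
have EPfin : (\int[mu]_w (ps w)%:E)%E \is a fin_num.
  rewrite ge0_fin_numE; last by case/andP: EPb.
  by case/andP: EPb => _ h; rewrite (le_lt_trans h) ?ltry.
have EPE : (\int[mu]_w (ps w)%:E)%E = EP%:E by rewrite fineK.
have EPge1 : 1 <= EP by rewrite -lee_fin -EPE.
have EP0 : 0 < EP by lra.
pose f2 := fun wy : Omega * R => (K (ps wy.1) wy.2)%:E.
have mf2 : measurable_fun setT f2.
  apply/measurable_EFinP.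
  exact: (@measurable_K R _ _ (fun wy => ps wy.1) snd s (measurableT_comp mps measurable_fst) measurable_snd).
have f20 wy : (0 <= f2 wy)%E by rewrite lee_fin; case/andP: (Kb (ps wy.1) wy.2 (ps0 _)).
pose J := fun y => (\int[mu]_w f2 (w, y))%E.
have mJ : measurable_fun setT J := @measurable_fun_fubini_tonelli_G _ _ _ _ _ mu f2 mf2 f20.
have Jb y : (0 <= J y <= theta%:E)%E.
  apply: int_boundsE.
    apply/measurable_EFinP.
    exact: (@measurable_K R _ _ ps (fun=> y) s mps (measurable_cst _)).
  move=> w; rewrite /f2 /= !lee_fin; have /andP[a b] := Kb (ps w) y (ps0 w).
  have /andP[_ c] := ps_in w.
  by rewrite a (le_trans b c).
have JF y : (\int[F]_z (K z y)%:E)%E = J y.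
  apply: (@pushF R _ _ mu ps F mps FE (fun z => K z y) theta).
    rewrite /K; apply: (@measurable_K R _ _ (fun z => z) (fun=> y) s); [exact: measurable_id | exact: measurable_cst].
  move=> w; have /andP[a b] := Kb (ps w) y (ps0 w).
  have /andP[_ c] := ps_in w.
  by rewrite ger0_norm // (le_trans b c).
have Jfin y : J y \is a fin_num.
  have /andP[a b] := Jb y; rewrite ge0_fin_numE // (le_lt_trans b) ?ltry //.
have UpsE y : Upsilon y = fine (J y) / EP by rewrite /Upsilon /Rintegral -JF.
pose JG := (\int[G]_y J y)%E.
have JGb : (0 <= JG <= theta%:E)%E by apply: int_boundsE.
have JGfin : JG \is a fin_num.
  have /andP[a b] := JGb; rewrite ge0_fin_numE // (le_lt_trans b) ?ltry //.
have IntU : \int[G]_y Upsilon y = fine JG / EP.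
  rewrite /Rintegral.
  have -> : (fun x => (Upsilon x)%:E) = (fun y => (J y * (EP^-1)%:E)%E).
    by apply/funext => y; rewrite UpsE EFinM fineK.
  rewrite ge0_integralZr //.
  - by rewrite fineM.
  - by move=> y _; case/andP: (Jb y).
  - by rewrite lee_fin invr_ge0 ltW.
pose f3 := fun zy : R * R => (Ecomp zy.1 zy.2 `^ s)%:E.
have mf3 : measurable_fun setT f3.
  apply/measurable_EFinP.
  exact: (@measurable_Es R _ _ fst snd s measurable_fst measurable_snd).
have f30 zy : (0 <= f3 zy)%E by rewrite lee_fin powR_ge0.
pose Ls := fun z => (\int[G]_y f3 (z, y))%E.
have mLs : measurable_fun setT Ls := @measurable_fun_fubini_tonelli_F _ _ _ _ _ G f3 mf3 f30.
have mEs z : measurable_fun setT (fun y => (Ecomp z y `^ s)%:E).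
  apply/measurable_EFinP.
  apply: (@measurable_Es R _ _ (fun=> z) (fun y => y) s); [exact: measurable_cst | exact: measurable_id].
have Lsb z : (0 <= Ls z <= 1%:E)%E.
  apply: int_boundsE; first exact: mEs z.
  move=> y; rewrite /f3 /= !lee_fin powR_ge0 powR_le1 ?Ecomp_le1 //; lra.
have Lsfin z : Ls z \is a fin_num.
  have /andP[a b] := Lsb z; rewrite ge0_fin_numE // (le_lt_trans b) ?ltry //.
have LamE z : Lambda z = fine (Ls z) by [].
have mLam : measurable_fun setT Lambda.
  exact: (measurableT_comp (fine_measurable measurableT) mLs).
have Lamb z : 0 <= Lambda z <= 1.
  by rewrite LamE; have /andP[a b] := Lsb z; rewrite fine_ge0 //= -lee_fin fineK.
have IntL : \int[F]_z (z * Lambda z / EP) = fine JG / EP.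
  rewrite /Rintegral.
  rewrite (@pushF R _ _ mu ps F mps FE (fun z => z * Lambda z / EP) theta); last 2 first.
  - apply: measurable_funM; last exact: measurable_cst.
    apply: measurable_funM => //; exact: measurable_id.
  - move=> w; have /andP[a b] := ps_in w; have /andP[c e] := Lamb (ps w).
    rewrite ger0_norm; last by rewrite !mulr_ge0 // ?invr_ge0; lra.
    rewrite ler_pdivrMr // (le_trans _ (ler_peMr _ EPge1)) //; last lra.
    rewrite (le_trans _ b) // ler_piMr //; lra.
  have -> : (fun w => (ps w * Lambda (ps w) / EP)%:E) =
            (fun w => ((\int[G]_y f2 (w, y)) * (EP^-1)%:E)%E).
    apply/funext => w; rewrite EFinM EFinM LamE fineK //.
    congr (_ * _)%E.
    rewrite /Ls /f2 /f3 /K /=.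
    under [RHS]eq_integral do rewrite EFinM.
    rewrite ge0_integralZl //.
    - by move=> y _; rewrite lee_fin powR_ge0.
    - by rewrite lee_fin ltW.
  rewrite ge0_integralZr //; last 3 first.
  - exact: (@measurable_fun_fubini_tonelli_F _ _ _ _ _ G f2 mf2 f20).
  - by move=> w _; apply: integral_ge0 => y _.
  - by rewrite lee_fin invr_ge0 ltW.
  rewrite (@fubini_tonelli _ _ _ _ _ mu G f2 mf2 f20).
  by rewrite fineM.
split; last by rewrite IntU IntL.
rewrite IntU /Rintegral.
set Ae := integral _ _ _.
pose A1f := fun wy : Omega * R => A1 theta r (fun i => P i wy.1) wy.2.
have A1b wy : 0 <= A1f wy <= theta.
  rewrite /A1f /A1.
  case: (af_spec (Phi1 theta r wy.2) [seq P i wy.1 | i <- enum 'I_n]) => [[-> _]|[h1 h2]].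
    by rewrite ler01; lra.
  move/mapP: h2 => [i _ ->]; have /andP[a b] := Pb i wy.1.
  by rewrite b andbT; lra.
pose I1 := \1_(`[1, theta]%classic) : R -> R.
have I1b y : 0 <= I1 y <= 1 by rewrite /I1 indicE; case: (_ \in _) => /=; rewrite ?lexx ?ler01.
pose h := fun wy : Omega * R => ((r * theta)^-1 * I1 wy.2 * K (ps wy.1) wy.2)%:E.
have h0 wy : (0 <= h wy)%E.
  rewrite /h lee_fin; apply: mulr_ge0; last by case/andP: (Kb (ps wy.1) wy.2 (ps0 _)).
  by apply: mulr_ge0; [rewrite invr_ge0; lra | case/andP: (I1b wy.2)].
have hA wy : (h wy <= (A1f wy)%:E)%E.
  rewrite /h lee_fin /I1 indicE.
  case: (boolP (wy.2 \in _)) => hy /=; last first.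
    by rewrite mulr0 mul0r; case/andP: (A1b wy).
  rewrite mulr1 -(@ler_pM2l _ (r * theta)) ?mulrA ?mulfV ?mul1r; try lra.
    apply: pointwise => //.
    by move: hy; rewrite inE /= in_itv.
have mh : measurable_fun setT h.
  apply/measurable_EFinP; apply: measurable_funM.
    apply: measurable_funM; first exact: measurable_cst.
    apply: measurableT_comp; last exact: measurable_snd.
    by apply: measurable_indic.
  exact: (@measurable_K R _ _ (fun wy => ps wy.1) snd s (measurableT_comp mps measurable_fst) measurable_snd).
have AeI : (\int[(mu \x G)%E]_wy h wy <= Ae)%E.
  by apply: le_integral_nm => // wy; exact: hA.
rewrite (@fubini_tonelli2 _ _ _ _ _ mu G h mh h0) in AeI.
have Hin y : fubini_G mu h y = (((r * theta)^-1 * I1 y)%:E * J y)%E.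
  rewrite /fubini_G /h /J /f2 /=.
  under eq_integral do rewrite EFinM.
  rewrite /= ge0_integralZl //.
  - apply/measurable_EFinP.
    rewrite /K; exact: (@measurable_K R _ _ ps (fun=> y) s mps (measurable_cst _)).
  - by move=> w _; rewrite lee_fin; case/andP: (Kb (ps w) y (ps0 _)).
  - by rewrite lee_fin; apply: mulr_ge0; [rewrite invr_ge0; lra | case/andP: (I1b y)].
have mI1 : measurable_fun setT I1 by apply: measurable_indic.
have GC : (G : {measure set R -> \bar R}) (~` `[1, theta]%classic) = 0%E.
  have := probability_setC G (measurable_itv `[1, theta]%R).
  by rewrite G1 subee.
have HI : (\int[G]_y ((I1 y)%:E * J y))%E = JG.
  have -> : (fun y => ((I1 y)%:E * J y)%E) = J \_ `[1, theta]%classic.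
    apply/funext => y; rewrite /I1 indicE /patch.
    by case: (_ \in _); rewrite ?mul1e ?mul0e.
  rewrite -integral_mkcond /JG.
  rewrite -[in RHS](setUv `[1, theta]%classic) ge0_integral_setU //.
  - rewrite [X in _ = (_ + X)%E]null_set_integral ?adde0 //.
    + exact: measurableC.
    + exact: measurable_funS mJ.
  - exact: measurableC.
  - by rewrite setUv.
  - by move=> y _; case/andP: (Jb y).
  - by rewrite disj_set2E setICr.
have HG : (\int[G]_y fubini_G mu h y = ((r * theta)^-1)%:E * JG)%E.
  under eq_integral do rewrite Hin EFinM -muleA.
  rewrite ge0_integralZl //.
  - by rewrite HI.
  - apply: emeasurable_funM => //; exact/measurable_EFinP.
  - by move=> y _; rewrite mule_ge0 //; [rewrite lee_fin; case/andP: (I1b y) | case/andP: (Jb y)].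
  - by rewrite lee_fin invr_ge0; lra.
rewrite HG in AeI.
have Ae0 : (0 <= Ae)%E.
  by apply: integral_ge0 => wy _; rewrite lee_fin; case/andP: (A1b wy).
have AeT : (Ae <= theta%:E)%E.
  apply: (@le_trans _ _ (\int[(mu \x G)%E]_wy (cst theta%:E) wy)%E).
    apply: le_integral_nm => wy.
      by rewrite lee_fin; case/andP: (A1b wy).
    by rewrite /= lee_fin; case/andP: (A1b wy).
  rewrite integral_cst //.
  have PT := @product_measure1E _ _ _ _ R mu G setT setT measurableT measurableT.
  rewrite setXTT in PT.
  apply: (@le_trans _ _ (theta%:E * 1)%E); last by rewrite mule1.
  rewrite le_eqVlt; apply/orP; left; apply/eqP; congr (_ * _)%E.
  by apply: eq_trans PT _; rewrite probT probT mule1.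
have Aefin : Ae \is a fin_num.
  by rewrite ge0_fin_numE // (le_lt_trans AeT) ?ltry.
rewrite mulrA; apply: ler_wpM2r; first by rewrite invr_ge0 ltW.
have -> : (r * theta)^-1 * fine JG = fine (((r * theta)^-1)%:E * JG)%E by rewrite fineM.
by apply: fine_le => //; rewrite fin_numM.
Qed.
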